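(* Let $\mathcal K=\{\mathbf x\in\mathbb R^n : \mathbf k_i^T\mathbf x\ge 0,\ i=1,\dots,p\}$ be a polyhedral cone with non-empty topological interior, where each $\mathbf k_i$ has unit Euclidean length. Define linear programs as follows. Problem $P_0$: maximize $z$ over $(\mathbf x,z)\in\mathbb R^n\times\mathbb R$ subject to $\mathbf k_i^T\mathbf x\ge z$ for all $i$ and $-1\le x_i\le 1$ for all $i=1,\dots,n$. Given Problem $P_\ell$, let $(\mathbf x_\ell,z_\ell)$ be an (arbitrarily chosen) optimal solution of $P_\ell$, let $\mathbf u_\ell=\mathbf x_\ell/\|\mathbf x_\ell\|$, and let Problem $P_{\ell+1}$ be Problem $P_\ell$ with the additional constraint $\mathbf u_\ell^T\mathbf x\le 1$. Then for any $\ell\ge 0$ and any $r$ with $0\le r<\|\mathbf x_\ell-\mathbf u_\ell\|$, the ball $B_r(\mathbf x_\ell)$ is disjoint from the feasible set of Problem $P_{\ell+1}$, i.e. there is no feasible point $(\mathbf x,z)$ of $P_{\ell+1}$ with $\mathbf x\in B_r(\mathbf x_\ell)$.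
   Context: $B_r(\mathbf x)=\{\mathbf y\in\mathbb R^n:\|\mathbf x-\mathbf y\|\le r\}$ denotes the closed ball, with $\|\cdot\|$ the Euclidean norm. (For each $\ell$, problem $P_\ell$ has an optimal solution and $\|\mathbf x_\ell\|\ge 1$, so $\mathbf u_\ell$ is well defined.) *)

(* Defs.v *)
From mathcomp Require Import all_boot all_order all_algebra.
From mathcomp Require Export reals.
Set Implicit Arguments. Unset Strict Implicit. Unset Printing Implicit Defensive.
Import Order.TTheory GRing.Theory Num.Theory.
Local Open Scope ring_scope.

Section Defs.
Variable R : realType.

Definition dotv (n : nat) (x y : 'I_n -> R) : R := \sum_(i < n) x i * y i.
Definition enorm (n : nat) (x : 'I_n -> R) : R := Num.sqrt (dotv x x).

Definition unitdir (n : nat) (x : 'I_n -> R) : 'I_n -> R :=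
  fun i => x i / enorm x.

(* Feasible set of problem P_l, where xs m is the chosen optimal x-part of P_m:
   k_i^T x >= z for all i, -1 <= x_j <= 1 for all j, and
   u_m^T x <= 1 for every m < l, with u_m = xs m / ||xs m||. *)
Definition feasP (n p : nat) (k : 'I_p -> 'I_n -> R) (xs : nat -> 'I_n -> R)
  (l : nat) (x : 'I_n -> R) (z : R) : Prop :=
  (forall i : 'I_p, z <= dotv (k i) x) /\
  (forall j : 'I_n, -1 <= x j <= 1) /\
  (forall m : nat, (m < l)%N -> dotv (unitdir (xs m)) x <= 1).

Definition optP (n p : nat) (k : 'I_p -> 'I_n -> R) (xs : nat -> 'I_n -> R)
  (l : nat) (x : 'I_n -> R) (z : R) : Prop :=
  feasP k xs l x z /\ (forall (y : 'I_n -> R) (w : R), feasP k xs l y w -> w <= z).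

End Defs.

(* Main.v *)
Require Import Defs.
From mathcomp Require Import all_boot all_order all_algebra.
From mathcomp Require Import reals.
From mathcomp Require Import ring lra.
Import Order.TTheory GRing.Theory Num.Theory.
Local Open Scope ring_scope.

Section H.
Variable R : realType.
Variable n : nat.
Implicit Types (x y a b c : 'I_n -> R).

Lemma dotv_ext a b a' b' : (forall j, a j = a' j) -> (forall j, b j = b' j) ->
  dotv a b = dotv a' b'.
Proof. by move=> ha hb; apply: eq_bigr => i _; rewrite ha hb. Qed.

Lemma enorm_ext a b : (forall j, a j = b j) -> enorm a = enorm b.
Proof. by move=> h; rewrite /enorm (@dotv_ext a a b b h h). Qed.

Lemma dotvC a b : dotv a b = dotv b a.
Proof. by apply: eq_bigr => i _; rewrite mulrC. Qed.

Lemma dotvB a b c : dotv a (fun j => b j - c j) = dotv a b - dotv a c.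
Proof. by rewrite /dotv -sumrB; apply: eq_bigr => i _; rewrite mulrBr. Qed.

Lemma dotvZ a b (c : R) : dotv a (fun j => c * b j) = c * dotv a b.
Proof. by rewrite /dotv mulr_sumr; apply: eq_bigr => i _; rewrite mulrCA. Qed.

Lemma dotvZl a b (c : R) : dotv (fun j => c * a j) b = c * dotv a b.
Proof. by rewrite dotvC dotvZ dotvC. Qed.

Lemma dotvBl a b c : dotv (fun j => a j - b j) c = dotv a c - dotv b c.
Proof. by rewrite dotvC dotvB !(dotvC c). Qed.

Lemma dotv_ge0 a : 0 <= dotv a a.
Proof. by apply: sumr_ge0 => i _; rewrite -expr2 sqr_ge0. Qed.

Lemma enorm_ge0 a : 0 <= enorm a.
Proof. exact: sqrtr_ge0. Qed.

Lemma enorm_sq a : enorm a ^+ 2 = dotv a a.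
Proof. by rewrite sqr_sqrtr // dotv_ge0. Qed.

Lemma enormZ a (c : R) : enorm (fun j => c * a j) = `|c| * enorm a.
Proof.
rewrite /enorm dotvZ dotvZl mulrA -expr2 sqrtrM ?sqr_ge0 //.
by rewrite sqrtr_sqr.
Qed.

Lemma coord_le j a : `|a j| <= enorm a.
Proof.
rewrite -sqrtr_sqr ler_sqrt ?dotv_ge0 // /dotv (bigD1 j) //= -expr2 lerDl.
by apply: sumr_ge0 => i _; rewrite -expr2 sqr_ge0.
Qed.

Lemma dot_unit_le a b : dotv a a = 1 -> dotv a b <= enorm b.
Proof.
move=> ha.
have h0 := dotv_ge0 (fun j => b j - dotv a b * a j).
have e : dotv (fun j => b j - dotv a b * a j) (fun j => b j - dotv a b * a j)
   = dotv b b - (dotv a b)^+2.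
  rewrite !dotvB !dotvBl !dotvZ !dotvZl ha (dotvC b a). ring.
have : (dotv a b) ^+ 2 <= dotv b b by lra.
rewrite -ler_sqrt ?dotv_ge0 // sqrtr_sqr => h.
exact: le_trans (ler_norm _) h.
Qed.

Lemma dotv0 a : enorm a = 0 -> forall b, dotv a b = 0.
Proof.
move=> h b; rewrite /dotv big1 // => i _.
have : `|a i| <= 0 by rewrite -h coord_le.
by rewrite normr_le0 => /eqP ->; rewrite mul0r.
Qed.

Lemma unitdir_le v b : dotv (unitdir v) b <= enorm b.
Proof.
have [h|h] := eqVneq (enorm v) 0.
  rewrite /unitdir (@dotv_ext _ _ (fun j => 0 * v j) b) //.
    by rewrite dotvZl mul0r enorm_ge0.
  by move=> j; rewrite h invr0 mulr0 mul0r.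
apply: dot_unit_le.
rewrite /unitdir (@dotv_ext _ _ (fun j => (enorm v)^-1 * v j) (fun j => (enorm v)^-1 * v j)); last 2 first.
  by move=> j; rewrite mulrC. by move=> j; rewrite mulrC.
rewrite dotvZ dotvZl -enorm_sq. field. exact: h.
Qed.

End H.

Theorem lemma1 (R : realType) (n p : nat) (k : 'I_p -> 'I_n -> R)
  (hk : forall i : 'I_p, enorm (k i) = 1)
  (hint : exists (x0 : 'I_n -> R) (e : R), 0 < e /\
     forall y : 'I_n -> R, enorm (fun j => y j - x0 j) < e ->
       forall i : 'I_p, 0 <= dotv (k i) y)
  (xs : nat -> 'I_n -> R) (zs : nat -> R)
  (hopt : forall l : nat, optP k xs l (xs l) (zs l)) :
  forall (l : nat) (r : R),
    0 <= r -> r < enorm (fun j => xs l j - unitdir (xs l) j) ->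
    ~ (exists (x : 'I_n -> R) (z : R),
         feasP k xs l.+1 x z /\ enorm (fun j => xs l j - x j) <= r).
Proof.
move=> l r r0 hr [y [w [[hz [hbox hcut]] hd]]].
have [[hzl [hboxl hcutl]] hmax] := hopt l.
set x := xs l in hr hd hcut hzl hboxl hcutl hmax.
set N := enorm x in hr.
have N0 : 0 <= N by exact: enorm_ge0.
have exu : enorm (fun j => x j - unitdir x j) = `|1 - N^-1| * N.
  rewrite -enormZ; apply: enorm_ext => j; rewrite /unitdir -/N; ring.
rewrite exu in hr.
have [Nz|Nnz] := eqVneq N 0.
  by move: hr; rewrite Nz mulr0; lra.
have Npos : 0 < N by rewrite lt_def Nnz N0.
have [w0 [w0pos hw0]] : exists w0, 0 < w0 /\ w0 <= zs l.
  case: hint => x0 [e [epos he]].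
  have kx0 : forall i, e / 2 <= dotv (k i) x0.
    move=> i.
    have hlt : enorm (fun j => (x0 j - (e/2) * k i j) - x0 j) < e.
      rewrite (@enorm_ext _ _ _ (fun j => (- (e/2)) * k i j)); last by move=> j; ring.
      rewrite enormZ hk mulr1 normrN ger0_norm; lra.
    have := he _ hlt i.
    rewrite dotvB dotvZ -enorm_sq hk expr1n mulr1; lra.
  have N0x : 0 <= enorm x0 by exact: enorm_ge0.
  set c := (1 + enorm x0)^-1.
  have cpos : 0 < c by rewrite invr_gt0; lra.
  have cN : c * enorm x0 <= 1.
    rewrite /c ler_pdivrMl; lra.
  have ey : enorm (fun j => c * x0 j) <= 1 by rewrite enormZ ger0_norm; lra.
  exists (c * (e / 2)); split; first by apply: mulr_gt0 => //; lra.
  apply: (hmax (fun j => c * x0 j)); split; [|split].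
  - by move=> i; rewrite dotvZ ler_wpM2l ?kx0 //; lra.
  - by move=> j; rewrite -ler_norml; apply: le_trans ey; exact: coord_le.
  - by move=> m _; apply: le_trans ey; exact: unitdir_le.
have N1 : 1 <= N.
  rewrite leNgt; apply/negP => Nlt.
  set t := N^-1.
  have tN : t * N = 1 by rewrite /t mulVf.
  have t1 : 1 < t by rewrite /t invf_gt1.
  have et : enorm (fun j => t * x j) = 1 by rewrite enormZ ger0_norm // ltW // (lt_trans ltr01).
  have tpos : 0 < t by exact: lt_trans ltr01 t1.
  have : t * zs l <= zs l.
    apply: (hmax (fun j => t * x j)); split; [|split].
    - by move=> i; rewrite dotvZ ler_wpM2l ?hzl // ltW.
    - by move=> j; rewrite -ler_norml -et coord_le.
    - by move=> m hm; rewrite -et unitdir_le.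
  move=> h; nra.
have hu : dotv (unitdir x) x = N.
  rewrite (@dotv_ext _ _ (unitdir x) x (fun j => N^-1 * x j) x); last 2 first.
    by move=> j; rewrite /unitdir mulrC. by [].
  rewrite dotvZl -[dotv x x]enorm_sq -/N; field; exact: Nnz.
have c1 := hcut l (ltnSn l).
have c2 := @unitdir_le _ _ x (fun j => x j - y j).
rewrite dotvB hu in c2.
move: hr; rewrite ger0_norm; last first.
  by rewrite subr_ge0 invf_le1.
have -> : (1 - N^-1) * N = N - 1 by field.
lra.
Qed.
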